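(* Let $n,m,\ell$ be positive integers with $m\le n-1$ and $\ell\le n-1$. Then $$\sum_{j=0}^{n-m-1}\binom{m-\ell+2j}{j}\,\mathcal Y_n\big(2^{\{n-m-j-1\}},1^{\{m-\ell+2j\}}\big)=\frac{1}{n^2}\binom{n}{m}\binom{n}{\ell}.$$
   Context: Let $\zeta_n=e^{2\pi\sqrt{-1}/n}$. For positive integers $s_1,\dots,s_m$, define $\mathfrak Z_n(s_1,\dots,s_m):=\sum_{1\le i_1<\cdots<i_m\le n-1}\prod_{k=1}^{m}(1-\zeta_n^{i_k})^{-s_k}$ (equal to $1$ if $m=0$ and to $0$ if $m>n-1$). Define $\mathcal Y_n(s_1,\dots,s_m):=\sum_{\sigma}\mathfrak Z_n(\sigma)$, where $\sigma$ runs over all distinct rearrangements of $(s_1,\dots,s_m)$; $\mathcal Y_n$ of the empty sequence is $1$. Notation: $a^{\{k\}}$ denotes the block $a,\dots,a$ of length $k$; any $\mathcal Y_n$ term in which some block has negative length is interpreted as $0$. Binomial coefficients $\binom{a}{b}$ are $0$ when $b<0$ or $b>a\ge0$. *)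

(* Defs.v *)
From HB Require Import structures.
From mathcomp Require Import all_boot all_order all_algebra.
From mathcomp Require Import complex.
From mathcomp Require Import reals trigo.
Set Implicit Arguments. Unset Strict Implicit. Unset Printing Implicit Defensive.
Import Order.TTheory GRing.Theory Num.Theory.
Local Open Scope ring_scope.
Local Open Scope complex_scope.

Definition zeta (R : realType) (n : nat) : R[i] :=
  ((cos (2 * pi / n%:R))%:C + 'i * (sin (2 * pi / n%:R))%:C)%C.

(* Zrec n lo s = sum over lo <= i_1 < ... < i_m <= n-1 of prod_k (1 - zeta^i_k)^(-s_k) *)
Fixpoint Zrec (R : realType) (n lo : nat) (s : seq nat) : R[i] :=
  match s with
  | [::] => 1
  | a :: s' => \sum_(lo <= i < n) (1 - zeta R n ^+ i) ^- a * Zrec R n i.+1 s'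
  end.

Definition Zfrak (R : realType) (n : nat) (s : seq nat) : R[i] := Zrec R n 1 s.

(* \mathcal Y_n(s): sum over all distinct rearrangements of s
   (seq.permutations s is the duplicate-free list of all permutations of s). *)
Definition Ycal (R : realType) (n : nat) (s : seq nat) : R[i] :=
  \sum_(t <- permutations s) Zfrak R n t.

(* Main.v *)
Require Import Defs.
From HB Require Import structures.
From mathcomp Require Import all_boot all_order all_algebra.
From mathcomp Require Import complex.
From mathcomp Require Import reals trigo.
From mathcomp Require Import ring lra zify.
Import Order.TTheory GRing.Theory Num.Theory.
Local Open Scope ring_scope.

Module Aux.
Set Implicit Arguments. Unset Strict Implicit. Unset Printing Implicit Defensive.

Section Zeta.
Variable R : realType.
Local Notation RC x := (real_complex R x).
Variable n : nat.
Hypothesis n_gt0 : (0 < n)%N.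
Local Notation t := (2 * pi / n%:R : R).

Lemma zetaX k : zeta R n ^+ k =
  RC (cos (t * k%:R)) + 'i%C * RC (sin (t * k%:R)).
Proof.
elim: k => [|k IH].
  by rewrite expr0 mulr0 cos0 sin0 mulr0 addr0.
have zE : zeta R n = RC (cos t) + 'i%C * RC (sin t) by [].
rewrite exprS IH zE.
have -> : t * k.+1%:R = t + t * k%:R by rewrite -[k.+1%:R]natr1 mulrDr mulr1 addrC.
rewrite cosD sinD !rmorphB !rmorphD !rmorphM /=.
have hI : ('i%C * 'i%C = -1 :> R[i]) by rewrite -expr2 sqr_i.
set a := RC (cos t); set b := RC (sin t); set c := RC (cos _); set d := RC (sin _).
transitivity (a * c + 'i%C * (a * d + b * c) + ('i%C * 'i%C) * (b * d)); first by ring.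
rewrite hI; ring.
Qed.

Lemma zetan : zeta R n ^+ n = 1.
Proof.
rewrite zetaX mulfVK; last by rewrite pnatr_eq0 -lt0n.
by rewrite mulr_natl cos2pi sin2pi mulr0 addr0.
Qed.

Lemma cos_ne1 (x : R) : 0 < x < pi *+ 2 -> cos x != 1.
Proof.
move=> /andP[x0 x2].
have hx : x = (x / 2) *+ 2 by rewrite -mulr_natr mulfVK // pnatr_eq0.
rewrite hx cos_mulr2n cos2sin2.
have : 0 < sin (x / 2).
  apply: sin_gt0_pi; apply/andP; split; first by rewrite divr_gt0.
  by rewrite ltr_pdivrMr // mulr_natr.
move=> hs; apply/eqP => h.
have : sin (x / 2) ^+ 2 = 0.
  move: h; rewrite mulrnBl mulr2n => h. 
  lra.
by move/eqP; rewrite sqrf_eq0 => /eqP h0; rewrite h0 ltxx in hs.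
Qed.

Lemma zetaX_neq1 k : (0 < k < n)%N -> zeta R n ^+ k != 1.
Proof.
move=> /andP[k0 kn]; rewrite zetaX; apply/eqP => /(congr1 (@complex.Re R)) /=.
move=> h; rewrite mul0r mul1r subr0 addr0 in h.
have: cos (t * k%:R) != 1.
  apply: cos_ne1; apply/andP; split.
    apply: mulr_gt0; last by rewrite ltr0n.
    apply: divr_gt0; [apply: mulr_gt0; [by []| exact: pi_gt0] | by rewrite ltr0n].
  have hp := @pi_gt0 R.
  rewrite mulrAC ltr_pdivrMr ?ltr0n //.
  have hk : (k%:R : R) < n%:R by rewrite ltr_nat.
  rewrite mulr2n; nra.
by rewrite h eqxx.
Qed.

Lemma zeta_prim : n.-primitive_root (zeta R n).
Proof.
apply/andP; split => //; apply/forallP => i; apply/eqP.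
rewrite unity_rootE.
case: (eqVneq i.+1 n) => [hn|hn]; first by rewrite hn zetan !eqxx.
by apply/negbTE; apply: zetaX_neq1; rewrite /= ltn_neqAle hn ltn_ord.
Qed.
End Zeta.

Section Poly.
Variable R : realType.
Variable n : nat.
Hypothesis n_gt0 : (0 < n)%N.
Local Notation C := (R[i]).
Local Notation z := (zeta R n).
Local Notation Zr := (Zrec R n).

Lemma Zrec_step lo a s : (lo < n)%N ->
  Zr lo (a :: s) = (1 - z ^+ lo) ^- a * Zr lo.+1 s + Zr lo.+1 (a :: s).
Proof. by move=> h; rewrite /= big_ltn. Qed.

Lemma Zrec_end lo a s : (n <= lo)%N -> Zr lo (a :: s) = 0.
Proof. by move=> h; rewrite /= big_geq. Qed.

Definition ee lo r := Zr lo (nseq r 1%N).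

Lemma ee_step lo r : (lo < n)%N ->
  ee lo r.+1 = (1 - z ^+ lo)^-1 * ee lo.+1 r + ee lo.+1 r.+1.
Proof. by move=> h; rewrite /ee (Zrec_step _ _ h) expr1. Qed.

Lemma ee_end lo r : (n <= lo)%N -> ee lo r = (r == 0%N)%:R.
Proof. by case: r => [|r] h //; rewrite /ee (Zrec_end _ _ h). Qed.

Lemma ee0 lo : ee lo 0 = 1.
Proof. by []. Qed.

Lemma coef_prod_ee k lo r : (n - lo <= k)%N ->
  (\prod_(lo <= i < n) (1 + 'X * ((1 - z ^+ i)^-1)%:P) : {poly C})`_r = ee lo r.
Proof.
elim: k lo r => [|k IH] lo r hk.
  by rewrite big_geq ?coef1 ?ee_end //; lia.
case: (leqP n lo) => hlo.
  by rewrite big_geq ?coef1 ?ee_end.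
rewrite big_ltn // mulrDl mul1r coefD -mulrA coefXM coefCM.
case: r => [|r] /=; first by rewrite IH ?ee0 ?addr0 //; lia.
rewrite ee_step // !IH; try lia.
by rewrite addrC.
Qed.

Lemma prodQ : \prod_(1 <= i < n) ('X - (z ^+ i)%:P) = \sum_(k < n) 'X^k :> {poly C}.
Proof.
have h := factor_Xn_sub_1 (zeta_prim R n_gt0).
rewrite big_ltn // expr0 subrX1 in h.
apply: (mulfI _ h); by rewrite polyXsubC_eq0.
Qed.

Lemma compXn (r : {poly C}) k : 'X^k \Po r = r ^+ k.
Proof.
elim: k => [|k IH]; first by rewrite expr0 -polyC1 comp_polyC.
by rewrite exprS comp_polyM comp_polyX IH exprS.
Qed.

Lemma prodY : \prod_(1 <= i < n) ('X + (1 - z ^+ i)%:P) = \sum_(k < n) ('X + 1) ^+ k :> {poly C}.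
Proof.
have := congr1 (fun p => p \Po ('X + 1)) prodQ => /=.
have c1 : (1 : {poly C}) \Po ('X + 1) = 1 by rewrite -polyC1 comp_polyC.
rewrite (big_morph (fun p => p \Po ('X + 1)) (fun p q => comp_polyM p q _) c1).
rewrite (big_morph (fun p => p \Po ('X + 1)) (fun p q => comp_polyD p q _) (comp_poly0 _)).
under [in X in _ = X -> _]eq_bigr do rewrite compXn.
move=> <-; apply: eq_bigr => i _.
by rewrite comp_polyB comp_polyX comp_polyC rmorphB rmorph1 addrA.
Qed.

Lemma prod_y : \prod_(1 <= i < n) (1 - z ^+ i) = n%:R :> C.
Proof.
have := congr1 (fun p => p.[1]) prodQ => /=.
rewrite horner_prod horner_sum.
under eq_bigr do rewrite hornerXsubC.
under [in X in _ = X -> _]eq_bigr do rewrite hornerXn expr1n.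
by rewrite sumr_const card_ord => ->.
Qed.

Lemma y_neq0 i : (1 <= i < n)%N -> 1 - z ^+ i != 0.
Proof. by move=> h; rewrite subr_eq0 eq_sym zetaX_neq1. Qed.

Lemma coef_X1 k r : (('X + 1) ^+ k : {poly C})`_r = ('C(k, r))%:R.
Proof.
elim: k r => [|k IH] r; first by rewrite expr0 coef1; case: r.
rewrite exprS mulrDl mul1r coefD coefXM.
case: r => [|r] /=; first by rewrite add0r IH !bin0.
by rewrite !IH binS natrD addrC.
Qed.

Lemma sum_bin r : \sum_(k < n) ('C(k, r))%:R = ('C(n, r.+1))%:R :> C.
Proof.
elim: (n) => [|m IH]; first by rewrite big_ord0 bin0n.
by rewrite big_ord_recr /= IH binS natrD addrC.
Qed.

Lemma ee1 r : ee 1 r = ('C(n, r.+1))%:R / n%:R.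
Proof.
rewrite -(@coef_prod_ee n) ?leq_subr //.
have -> : \prod_(1 <= i < n) (1 + 'X * ((1 - z ^+ i)^-1)%:P) =
    (\prod_(1 <= i < n) (1 - z ^+ i)^-1)%:P * \prod_(1 <= i < n) ('X + (1 - z ^+ i)%:P) :> {poly C}.
  rewrite rmorph_prod -big_split /=; rewrite !big_nat; apply: eq_bigr => i hi.
  by rewrite mulrDr -polyCM mulVf ?y_neq0 // polyC1 addrC mulrC.
rewrite prodY prodfV prod_y coefCM coef_sum.
under eq_bigr do rewrite coef_X1.
by rewrite sum_bin mulrC.
Qed.
End Poly.

Section Comb.
Variable R : realType.
Variable n : nat.
Local Notation C := (R[i]).
Local Notation z := (zeta R n).
Local Notation Zr := (Zrec R n).

Definition ms a b := nseq a 2%N ++ nseq b 1%N.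

Lemma rem1 a b : rem 1%N (ms a b.+1) = ms a b.
Proof. by elim: a => [|a IH] //=; rewrite /ms /= in IH *; rewrite IH. Qed.

Lemma undup_sum (s : seq nat) (G : nat -> C) :
  all (fun x => (x == 2%N) || (x == 1%N)) s ->
  \sum_(x <- undup s) G x = \sum_(x <- [:: 2%N; 1%N] | x \in s) G x.
Proof.
move=> hs; rewrite -[RHS]big_filter; apply: perm_big; apply: uniq_perm.
- exact: undup_uniq.
- exact: filter_uniq.
move=> x; rewrite mem_undup mem_filter; apply/idP/idP => [hx|/andP[//]].
by rewrite hx /=; move/allP: hs => /(_ x hx); rewrite !inE.
Qed.

Lemma ms_split a b (F : seq nat -> C) : (0 < a + b)%N ->
  \sum_(t <- permutations (ms a b)) F t =
    (if (0 < a)%N then \sum_(t <- permutations (ms a.-1 b)) F (2%N :: t) else 0) +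
    (if (0 < b)%N then \sum_(t <- permutations (ms a b.-1)) F (1%N :: t) else 0).
Proof.
move=> hab.
rewrite (perm_big _ (permutationsE _)); last by rewrite /ms size_cat !size_nseq.
rewrite big_allpairs_dep undup_sum; last first.
  by rewrite /ms all_cat; apply/andP; split; apply/allP => x /nseqP [-> _]; rewrite eqxx ?orbT.
rewrite big_cons big_cons big_nil addr0 !mem_cat !mem_nseq /= !andbT !andbF ?orbF /=.
case: b {hab} => [|b]; last rewrite rem1.
  by case: a => [|a] //=; rewrite ?addr0.
by case: a => [|a] //=; rewrite ?add0r.
Qed.

Definition Ee lo a b := \sum_(t <- permutations (ms a b)) Zr lo t.

Lemma E00 lo : Ee lo 0 0 = 1.
Proof. by rewrite /Ee /ms /= big_seq1. Qed.

Lemma E_end lo a b : (n <= lo)%N -> Ee lo a b = ((a == 0%N) && (b == 0%N))%:R.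
Proof.
move=> h; case: (posnP (a + b)) => hab.
  have [-> ->] : a = 0%N /\ b = 0%N by lia.
  by rewrite E00.
have -> : (a == 0%N) && (b == 0%N) = false by apply/negbTE; lia.
rewrite /Ee ms_split //.
by case: ifP => _; case: ifP => _; rewrite ?big1 ?addr0 ?add0r //; move=> t _; exact: Zrec_end.
Qed.

Definition W lo (t : seq nat) : C :=
  if t is c :: t' then (1 - z ^+ lo) ^- c * Zr lo.+1 t' else 0.

Lemma Zr_W lo t : (lo < n)%N -> Zr lo t = Zr lo.+1 t + W lo t.
Proof.
case: t => [|c t] h /=; first by rewrite addr0.
by rewrite big_ltn // addrC.
Qed.

Lemma E_step lo a b : (lo < n)%N ->
  Ee lo a b = Ee lo.+1 a b
    + (if (0 < a)%N then (1 - z ^+ lo) ^- 2 * Ee lo.+1 a.-1 b else 0)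
    + (if (0 < b)%N then (1 - z ^+ lo) ^- 1 * Ee lo.+1 a b.-1 else 0).
Proof.
move=> h; case: (posnP (a + b)) => hab.
  have [-> ->] : a = 0%N /\ b = 0%N by lia.
  by rewrite !E00 /= !addr0.
rewrite /Ee (eq_bigr (fun t => Zr lo.+1 t + W lo t)) => [|t _]; last exact: Zr_W.
rewrite big_split /= -addrA; congr (_ + _).
rewrite ms_split //; congr (_ + _); case: ifP => // _; by rewrite mulr_sumr.
Qed.
End Comb.

Section Sum.
Variable R : realType.
Variable n : nat.
Local Notation C := (R[i]).
Local Notation z := (zeta R n).
Local Notation Ee := (Ee R n).

Definition Tt lo r s j : C :=
  if (j <= r)%N && (r <= s + 2 * j)%N
  then ('C(s + 2 * j - r, j))%:R * Ee lo (r - j) (s + 2 * j - r) else 0.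

Lemma Tt_out lo r s j : ~~ ((j <= r)%N && (r <= s + 2 * j)%N) -> Tt lo r s j = 0.
Proof. by rewrite /Tt => /negbTE ->. Qed.

Lemma T_step lo r s j : (lo < n)%N ->
  Tt lo r s j = Tt lo.+1 r s j
   + (if (0 < r)%N && (0 < s)%N then (1 - z ^+ lo) ^- 2 * Tt lo.+1 r.-1 s.-1 j else 0)
   + (1 - z ^+ lo) ^- 1 * ((if (0 < s)%N then Tt lo.+1 r s.-1 j else 0)
        + (if j is j'.+1 then (if (0 < r)%N then Tt lo.+1 r.-1 s j' else 0) else 0)).
Proof.
move=> hlo.
case: (boolP ((j <= r)%N && (r <= s + 2 * j)%N)) => c; last first.
  rewrite (Tt_out lo c) (Tt_out lo.+1 c) add0r.
  have -> : (if (0 < r)%N && (0 < s)%N then (1 - z ^+ lo) ^- 2 * Tt lo.+1 r.-1 s.-1 j else 0) = 0.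
    by case: ifP => [/andP[h0 h0']|]; rewrite ?mulr0 //; rewrite (Tt_out lo.+1) ?mulr0 //; lia.
  have -> : (if (0 < s)%N then Tt lo.+1 r s.-1 j else 0) = 0.
    by case: ifP => h0 //; rewrite (Tt_out lo.+1) //; lia.
  case: j c => [|j] c /=; rewrite ?add0r ?mulr0 //.
  by case: ifP => h0; rewrite ?mulr0 //; rewrite (Tt_out lo.+1) ?mulr0 //; lia.
have /andP[hj hr] := c.
rewrite {1}/Tt c E_step // !mulrDr; congr (_ + _ + _).
- by rewrite /Tt c.
- case: (posnP r) => [r0|rp].
    by rewrite r0 sub0n /= mulr0.
  case: (posnP s) => [s0|sp].
    rewrite andbF; case: ifP => h; rewrite ?mulr0 //.
    by rewrite bin_small ?mul0r //; lia.
  rewrite /= /Tt.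
  have -> : (j <= r.-1)%N && (r.-1 <= s.-1 + 2 * j)%N = (0 < r - j)%N.
    apply/idP/idP; lia.
  case: ifP => h; rewrite ?mulr0 //.
  have -> : (s.-1 + 2 * j - r.-1 = s + 2 * j - r)%N by lia.
  have -> : (r.-1 - j = (r - j).-1)%N by lia.
  by rewrite mulrCA.
  rewrite -mulrDr.
  case: (posnP (s + 2 * j - r)) => [b0|bp].
    rewrite b0 /= mulr0.
    have -> : (if (0 < s)%N then Tt lo.+1 r s.-1 j else 0) = 0.
      by case: ifP => h //; rewrite (Tt_out lo.+1) //; lia.
    case: j c hj hr b0 => [|j] c hj hr b0 /=; rewrite ?add0r ?mulr0 //.
    by case: ifP => h; rewrite ?mulr0 //; rewrite (Tt_out lo.+1) ?mulr0 //; lia.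
  rewrite /= mulrCA; congr (_ * _).
  have [b' eb] : exists b', (s + 2 * j - r = b'.+1)%N by exists (s + 2 * j - r).-1; lia.
  rewrite eb /=.
  have Y1 : (if (0 < s)%N then Tt lo.+1 r s.-1 j else 0) =
            ('C(b', j))%:R * Ee lo.+1 (r - j) b'.
    case: (posnP s) => [s0|sp].
      by rewrite /= bin_small ?mul0r //; lia.
    rewrite /Tt.
    have -> : (j <= r)%N && (r <= s.-1 + 2 * j)%N = true by apply/andP; split; lia.
    by have -> : (s.-1 + 2 * j - r = b')%N by lia.
  rewrite Y1.
  case: j c hj hr bp eb Y1 => [|j] c hj hr bp eb Y1 /=.
    by rewrite !bin0 addr0.
  case: (posnP r) => [r0|rp]; first lia.
  rewrite /Tt.
  have -> : (j <= r.-1)%N && (r.-1 <= s + 2 * j)%N = true by apply/andP; split; lia.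
  have -> : (s + 2 * j - r.-1 = b')%N by lia.
  have -> : (r.-1 - j = r - j.+1)%N by lia.
  by rewrite binS natrD mulrDl.
Qed.

Definition Ssum N lo r s := \sum_(0 <= j < N) Tt lo r s j.

Lemma sum_if (b : bool) N (G : nat -> C) :
  \sum_(0 <= j < N) (if b then G j else 0) = if b then \sum_(0 <= j < N) G j else 0.
Proof. by case: b => //; rewrite big1. Qed.

Lemma sum_shift (F : nat -> C) N :
  \sum_(0 <= j < N.+1) (if j is j'.+1 then F j' else 0) = \sum_(0 <= j < N) F j.
Proof. by rewrite big_nat_recl // add0r. Qed.

Lemma S_step N lo r s : (lo < n)%N ->
  Ssum N.+1 lo r s = Ssum N.+1 lo.+1 r s
   + (if (0 < r)%N && (0 < s)%N then (1 - z ^+ lo) ^- 2 * Ssum N.+1 lo.+1 r.-1 s.-1 else 0)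
   + (1 - z ^+ lo) ^- 1 * ((if (0 < s)%N then Ssum N.+1 lo.+1 r s.-1 else 0)
        + (if (0 < r)%N then Ssum N lo.+1 r.-1 s else 0)).
Proof.
move=> hlo; rewrite /Ssum.
rewrite (eq_bigr _ (fun j _ => T_step r s j hlo)).
rewrite !big_split /= -mulr_sumr big_split /= !sum_if -mulr_sumr.
congr (_ + _ + _ * (_ + _)).
by rewrite sum_shift sum_if.
Qed.

Lemma T_end lo r s j : (n <= lo)%N ->
  Tt lo r s j = ((j == 0%N) && (r == 0%N) && (s == 0%N))%:R.
Proof.
move=> h; rewrite /Tt E_end //.
case: ifP => h1.
  case: (boolP (((r - j)%N == 0%N) && ((s + 2 * j - r)%N == 0%N))) => h2.
    have [-> [-> ->]] : j = 0%N /\ r = 0%N /\ s = 0%N by lia.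
    by rewrite /= mulr1.
  rewrite mulr0.
  by have -> : (j == 0%N) && (r == 0%N) && (s == 0%N) = false by apply/negbTE; lia.
by have -> : (j == 0%N) && (r == 0%N) && (s == 0%N) = false by apply/negbTE; lia.
Qed.

Lemma S_ee k : forall lo, (n - lo <= k)%N -> forall N r s, (r < N)%N ->
  Ssum N lo r s = ee R n lo r * ee R n lo s.
Proof.
elim: k => [|k IH] lo hk N r s hr.
- rewrite /Ssum (eq_bigr _ (fun j _ => T_end r s j _)); last lia.
  case: N hr => [|N] hr //.
  rewrite big_nat_recl // big1 ?addr0; last by move=> i _.
  rewrite !ee_end; try lia.
  by case: r {hr}; case: s => //=; rewrite ?mulr1 ?mulr0 ?mul0r.
case: (leqP n lo) => hlo.
  rewrite /Ssum (eq_bigr _ (fun j _ => T_end r s j hlo)).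
  case: N hr => [|N] hr //.
  rewrite big_nat_recl // big1 ?addr0; last by move=> i _.
  rewrite !ee_end //.
  by case: r {hr}; case: s => //=; rewrite ?mulr1 ?mulr0 ?mul0r.
case: N hr => [|N] hr //.
have IH' := IH lo.+1 ltac:(lia).
rewrite S_step //.
have uv : (1 - z ^+ lo) ^- 2 = (1 - z ^+ lo) ^- 1 * (1 - z ^+ lo) ^- 1 by rewrite -exprVn expr2.
rewrite uv.
case: r hr => [|r] hr; case: s => [|s] /=; rewrite !IH' //; try lia.
- by rewrite !ee0 !mulr1 !addr0 mulr0 addr0.
- rewrite !ee0 (ee_step R s hlo) !expr1; ring.
- rewrite !ee0 (ee_step R r hlo) !expr1; ring.
- rewrite (ee_step R s hlo) (ee_step R r hlo) !expr1; ring.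
Qed.
End Sum.
End Aux.
Import Aux.

Theorem theorem7 (R : realType) (n m l : nat)
  (hm : (0 < m)%N) (hl : (0 < l)%N) (hmn : (m <= n - 1)%N) (hln : (l <= n - 1)%N) :
  \sum_(0 <= j < n - m)
     (if (l <= m + 2 * j)%N
      then ('C(m + 2 * j - l, j))%:R *
           Ycal R n (nseq (n - m - j - 1) 2%N ++ nseq (m + 2 * j - l) 1%N)
      else 0)
  = (('C(n, m) * 'C(n, l))%:R / (n ^ 2)%:R : R[i]).
Proof.
have n_gt0 : (0 < n)%N by lia.
transitivity (Ssum R n (n - m) 1 (n - m - 1) (n - l - 1)).
  rewrite /Ssum; apply: eq_big_nat => j hj.
  rewrite /Tt.
  have -> : (j <= n - m - 1)%N && (n - m - 1 <= n - l - 1 + 2 * j)%N = (l <= m + 2 * j)%N.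
    by apply/idP/idP; lia.
  case: ifP => // h.
  have -> : (n - l - 1 + 2 * j - (n - m - 1) = m + 2 * j - l)%N by lia.
  have -> : (n - m - 1 - j = n - m - j - 1)%N by lia.
  by [].
rewrite (@S_ee R n n 1) ?subn1 //; try lia.
rewrite !ee1 //.
have -> : (n - m).-1.+1 = (n - m)%N by lia.
have -> : (n - l).-1.+1 = (n - l)%N by lia.
rewrite !bin_sub; try lia.
have hn : (n%:R : R[i]) != 0 by rewrite pnatr_eq0 -lt0n.
rewrite natrM natrX; field.
by rewrite hn.
Qed.
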